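(* Let $n\ge3$ and let $G$ be a spanning subgraph of $CT_n$ containing no cycle of length $6$. Then for every edge $e$ of $CT_n$ there are at most two $4$-cycles $H$ of $CT_n$ with $e\in E(H)$ such that the three edges of $H$ other than $e$ all belong to $G$.
   Context: $CT_n$ is the graph with vertex set the symmetric group $\mathrm{S}_n$ on $\{1,\dots,n\}$ in which $\{x,y\}$ is an edge iff $yx^{-1}$ is a transposition. *)

(* Defs.v *)
From mathcomp Require Import all_boot all_fingroup.
Set Implicit Arguments. Unset Strict Implicit. Unset Printing Implicit Defensive.
Local Open Scope group_scope.

Definition is_transposition (n : nat) (z : {perm 'I_n}) : bool :=
  [exists i : 'I_n, exists j : 'I_n, (i != j) && (z == tperm i j)].

(* Adjacency of CT_n: {x,y} is an edge iff y x^{-1} is a transposition.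
   In mathcomp, (x^-1 * y) is the map a |-> y (x^-1 a), i.e. y o x^{-1}. *)
Definition CT (n : nat) : rel {perm 'I_n} :=
  fun x y => is_transposition (x^-1 * y).

Definition is_edge_of (n : nat) (g : rel {perm 'I_n}) (f : {set {perm 'I_n}}) : bool :=
  [exists u, exists v, (f == [set u; v]) && g u v].

Definition cyc4_edges (n : nat) (a b c d : {perm 'I_n}) : {set {set {perm 'I_n}}} :=
  [set [set a; b]; [set b; c]; [set c; d]; [set d; a]].

Definition is_C4_of_CT (n : nat) (H : {set {set {perm 'I_n}}}) : bool :=
  [exists a, exists b, exists c, exists d,
     [&& uniq [:: a; b; c; d], CT a b, CT b c, CT c d, CT d a
       & H == cyc4_edges a b c d]].

Definition has_C6 (n : nat) (g : rel {perm 'I_n}) : Prop :=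
  exists v : 'I_6 -> {perm 'I_n},
    injective v /\ forall i : 'I_6, g (v i) (v (ordS i)).

(* Main.v *)
Require Import Defs.
From mathcomp Require Import all_boot all_fingroup.
Set Implicit Arguments. Unset Strict Implicit. Unset Printing Implicit Defensive.
Local Open Scope group_scope.

Section Alg.
Variable n : nat.
Implicit Types (i j k l a b c d z : 'I_n) (s q p : {perm 'I_n}).

Lemma tpE i j z : tperm i j z = if z == i then j else if z == j then i else z.
Proof. by rewrite permE. Qed.

Ltac dec := repeat (match goal with
 | |- context [?x == ?x] => rewrite eqxx
 | H : is_true (?x != ?y) |- context [?x == ?y] => rewrite (negbTE H)
 | H : is_true (?y != ?x) |- context [?x == ?y] => rewrite (eq_sym x y) (negbTE H)
 end; rewrite /=).

Lemma mv c d z : tperm c d z != z -> (z == c) || (z == d).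
Proof. by rewrite tpE; case: (z == c); case: (z == d) => //; rewrite eqxx. Qed.

Lemma tp3 c d z1 z2 z3 : z1 != z2 -> z2 != z3 -> z1 != z3 ->
  tperm c d z1 != z1 -> tperm c d z2 != z2 -> tperm c d z3 != z3 -> False.
Proof.
move=> h12 h23 h13 /mv/orP[]/eqP e1 /mv/orP[]/eqP e2 /mv/orP[]/eqP e3; subst;
  by rewrite ?eqxx in h12 h23 h13.
Qed.

Lemma valid_mv a b c d : a != b -> tperm a b * tperm c d != 1 ->
  (tperm a b * tperm c d) a != a.
Proof.
move=> hab h1; rewrite permM tpermL; apply/eqP => e.
have : tperm c d = tperm a b.
  have := mv (c:=c) (d:=d) (z:=b); rewrite e => /(_ hab) /orP[]/eqP eb.
    by rewrite eb tpermL in e; rewrite eb e tpermC.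
  by rewrite eb tpermR in e; rewrite eb e.
by move=> ee; move: h1; rewrite ee tperm2 eqxx.
Qed.

Lemma valid_mv2 a b c d : a != b -> tperm a b * tperm c d != 1 ->
  (tperm a b * tperm c d) a != a /\ (tperm a b * tperm c d) b != b.
Proof.
move=> hab h1; split; first exact: valid_mv.
by rewrite tpermC; apply: valid_mv; rewrite ?(eq_sym b) // -tpermC.
Qed.

Lemma mv_sub i j k l z : (tperm i j * tperm k l) z != z -> z \in [:: i; j; k; l].
Proof.
move=> h; apply/negPn/negP => hn; move: h; rewrite !inE !negb_or in hn.
case/and4P: hn => h1 h2 h3 h4.
by rewrite permM !tpermD ?eqxx // eq_sym.
Qed.
Lemma caseA i j k l a b c d : i != j -> i != k -> i != l -> j != k -> j != l -> k != l ->
  a != b -> tperm i j * tperm k l = tperm a b * tperm c d ->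
  tperm a b \in [:: tperm i j; tperm k l].
Proof.
move=> hij hik hil hjk hjl hkl hab E.
have n1 : tperm a b * tperm c d != 1.
  rewrite -E; apply/eqP => /permP /(_ i); rewrite permM tpermL tpermD 1?eq_sym // perm1 => e; by move: hij; rewrite e eqxx.
have [ma mb] := valid_mv2 hab n1.
rewrite -E in ma mb; move/mv_sub: ma; move/mv_sub: mb.
have Hp : forall z, tperm c d z = (tperm i j * tperm k l) (tperm a b z).
  by move=> z; rewrite E permM tpermK.
rewrite !inE => Hb Ha.
have T3 : tperm c d i != i -> tperm c d j != j -> tperm c d k != k -> False.
  exact: tp3.
case/or4P: Ha => /eqP ea; case/or4P: Hb => /eqP eb; subst a b; rewrite ?eqxx ?orbT //;
  try (by move: hab; rewrite eqxx); try (by rewrite tpermC eqxx ?orbT);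
  exfalso; apply: T3; rewrite !Hp !permM !tpE; dec => //.
Qed.
Lemma caseB x y z a b : x != y -> y != z -> x != z -> a != b ->
  a \in [:: x; y; z] -> b \in [:: x; y; z] ->
  tperm a b \in [:: tperm x y; tperm y z; tperm x z].
Proof.
move=> hxy hyz hxz hab; rewrite !inE => /or3P[]/eqP ea /or3P[]/eqP eb; subst a b;
  rewrite ?eqxx ?orbT //; try (by move: hab; rewrite eqxx);
  by rewrite tpermC eqxx ?orbT.
Qed.

Lemma Lvalid i j k l : i != j -> k != l -> tperm i j * tperm k l != 1 ->
  exists s : seq {perm 'I_n}, size s <= 3 /\ forall a b c d, a != b ->
   tperm i j * tperm k l = tperm a b * tperm c d -> tperm a b \in s.
Proof.
move=> hij hkl n1.
have Mv : forall a b c d, a != b -> tperm i j * tperm k l = tperm a b * tperm c d ->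
   a \in [:: i; j; k; l] /\ b \in [:: i; j; k; l].
  move=> a b c d hab E; have n1' : tperm a b * tperm c d != 1 by rewrite -E.
  have [ma mb] := valid_mv2 hab n1'.
  by rewrite -E in ma mb; split; apply: mv_sub.
case: (i =P k) => [ik|nik].
  subst k; case: (j =P l) => [jl|njl]; first by subst l; move: n1; rewrite tperm2 eqxx.
  exists [:: tperm i j; tperm j l; tperm i l]; split => // a b c d hab E.
  have [ma mb] := Mv _ _ _ _ hab E.
  apply: caseB => //; try (by apply/eqP); [move: ma | move: mb]; rewrite !inE;
     by case/or4P => ->; rewrite ?orbT.
case: (i =P l) => [il|nil].
  subst l; case: (j =P k) => [jk|njk]; first by subst k; move: n1; rewrite tpermC tperm2 eqxx.
  exists [:: tperm i j; tperm j k; tperm i k]; split => // a b c d hab E.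
  have [ma mb] := Mv _ _ _ _ hab E.
  apply: caseB => //; try (by apply/eqP); [move: ma | move: mb]; rewrite !inE;
     by case/or4P => ->; rewrite ?orbT.
case: (j =P k) => [jk|njk].
  subst k; exists [:: tperm i j; tperm j l; tperm i l]; split => // a b c d hab E.
  have [ma mb] := Mv _ _ _ _ hab E.
  apply: caseB => //; try (by apply/eqP); [move: ma | move: mb]; rewrite !inE;
     by case/or4P => ->; rewrite ?orbT.
case: (j =P l) => [jl|njl].
  subst l; exists [:: tperm i j; tperm j k; tperm i k]; split => // a b c d hab E.
  have [ma mb] := Mv _ _ _ _ hab E.
  apply: caseB => //; try (by apply/eqP); [move: ma | move: mb]; rewrite !inE;
     by case/or4P => ->; rewrite ?orbT.
exists [:: tperm i j; tperm k l]; split => // a b c d hab E.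
apply: caseA E => //; apply/eqP => //.
Qed.
End Alg.

Section CTl.
Variable n : nat.
Implicit Types (x y u w c : {perm 'I_n}).

Lemma CT_ex x y : CT x y -> exists i j : 'I_n, i != j /\ x^-1 * y = tperm i j.
Proof. by case/existsP => i /existsP [j /andP [h /eqP e]]; exists i, j. Qed.

Lemma CTsym x y : CT x y -> CT y x.
Proof.
case/CT_ex => i [j [h e]]; apply/existsP; exists i; apply/existsP; exists j.
by rewrite h /= -tpermV -e invMg invgK eqxx.
Qed.

Lemma CT_odd x y : CT x y -> odd_perm x (+) odd_perm y.
Proof.
case/CT_ex => i [j [h e]].
by have := odd_tperm i j; rewrite -e odd_permM odd_permV h.
Qed.

Lemma CT_neq x y : CT x y -> x != y.
Proof. by move/CT_odd; apply: contraL => /eqP ->; rewrite addbb. Qed.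

Lemma no_tri x a b : CT x a -> CT a b -> CT x b -> False.
Proof.
move=> /CT_odd h1 /CT_odd h2 /CT_odd h3; move: h1 h2 h3.
by case: (odd_perm x); case: (odd_perm a); case: (odd_perm b).
Qed.

Lemma CN u w c1 c2 c3 c4 : u != w -> uniq [:: c1; c2; c3; c4] ->
  CT u c1 -> CT c1 w -> CT u c2 -> CT c2 w -> CT u c3 -> CT c3 w ->
  CT u c4 -> CT c4 w -> False.
Proof.
move=> nuw U.
have key : forall c, CT u c -> CT c w -> exists a b c' d : 'I_n, a != b /\ c' != d /\
   u^-1 * c = tperm a b /\ u^-1 * w = tperm a b * tperm c' d.
  move=> c /CT_ex [a [b [hab e1]]] /CT_ex [c' [d [hcd e2]]].
  exists a, b, c', d; split=> //; split=> //; split=> //.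
  by rewrite -e1 -e2 mulgA mulgK.
move=> H1 H1' H2 H2' H3 H3' H4 H4'.
have [a1 [b1 [c1' [d1 [h1 [nc1 [e1 f1]]]]]]] := key _ H1 H1'.
have [a2 [b2 [c2' [d2 [h2 [_ [e2 f2]]]]]]] := key _ H2 H2'.
have [a3 [b3 [c3' [d3 [h3 [_ [e3 f3]]]]]]] := key _ H3 H3'.
have [a4 [b4 [c4' [d4 [h4 [_ [e4 f4]]]]]]] := key _ H4 H4'.
have n1 : tperm a1 b1 * tperm c1' d1 != 1.
  by rewrite -f1; apply: contra nuw => /eqP/(congr1 (mulg u)); rewrite mulKVg mulg1 => ->.
have [s [ss hs]] := Lvalid h1 nc1 n1.
have : uniq [:: u^-1 * c1; u^-1 * c2; u^-1 * c3; u^-1 * c4].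
  by rewrite (map_inj_uniq (f := mulg u^-1) _ [:: c1; c2; c3; c4]) //; apply: mulgI.
rewrite e1 e2 e3 e4 => U2.
have := uniq_leq_size U2 (s2 := s).
have sub : {subset [:: tperm a1 b1; tperm a2 b2; tperm a3 b3; tperm a4 b4] <= s}.
  move=> z; rewrite !inE => /or4P[]/eqP ->.
  - exact: hs _ _ _ _ h1 (erefl _).
  - by apply: (hs _ _ _ _ h2); rewrite -f1 f2.
  - by apply: (hs _ _ _ _ h3); rewrite -f1 f3.
  - by apply: (hs _ _ _ _ h4); rewrite -f1 f4.
by move/(_ sub); rewrite leqNgt /= (leq_ltn_trans ss).
Qed.
End CTl.

Section Sets.
Variable T : finType.
Implicit Types (p q r s u v x y : T).

Lemma uniq4E p q r s : uniq [:: p; q; r; s] = [&& p != q, p != r, p != s, q != r, q != s & r != s].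
Proof. by rewrite /= !inE !negb_or !andbT -!andbA. Qed.

Lemma set2C u v : [set u; v] = [set v; u].
Proof. by apply/setP => z; rewrite !inE orbC. Qed.

Lemma set2_eq x y u v : x != y -> [set x; y] = [set u; v] -> (u = x /\ v = y) \/ (u = y /\ v = x).
Proof.
move=> hxy E.
have hx : x \in [set u; v] by rewrite -E !inE eqxx.
have hy : y \in [set u; v] by rewrite -E !inE eqxx orbT.
have hu : u \in [set x; y] by rewrite E !inE eqxx.
have hv : v \in [set x; y] by rewrite E !inE eqxx orbT.
move: hx hy hu hv; rewrite !inE.
case/orP=> /eqP ex; case/orP=> /eqP ey; subst; rewrite ?eqxx in hxy => //.
  by left.
by right.
Qed.

Lemma set2_ne u v u' v' : u != u' -> u != v' -> [set u; v] != [set u'; v'].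
Proof.
move=> h1 h2; apply/eqP => E.
have : u \in [set u'; v'] by rewrite -E !inE eqxx.
by rewrite !inE (negbTE h1) (negbTE h2).
Qed.

Lemma edge_set (G : rel T) u v : symmetric G -> u != v ->
  [exists a, exists b, ([set u; v] == [set a; b]) && G a b] -> G u v.
Proof.
move=> Gs huv /existsP [a /existsP [b /andP [/eqP E g]]].
by case: (set2_eq huv E) => [[ea eb]|[ea eb]]; rewrite ea eb in g => //; rewrite Gs.
Qed.
End Sets.

Section Graph.
Variable n : nat.
Variable G : rel {perm 'I_n}.
Hypothesis Gsym : symmetric G.
Variables x y : {perm 'I_n}.
Hypothesis hxy : CT x y.
Implicit Types (p q r s a b : {perm 'I_n}).

Lemma set4P (T : finType) (A B C D : T) : [set A; B; C; D] = [set B; C; D; A].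
Proof.
apply/setP => f; rewrite !inE.
move: (f == A) (f == B) (f == C) (f == D) => [] [] [] [].
all: by [].
Qed.

Lemma set4R (T : finType) (A B C D : T) : [set A; B; C; D] = [set D; C; B; A].
Proof.
apply/setP => f; rewrite !inE.
move: (f == A) (f == B) (f == C) (f == D) => [] [] [] [].
all: by [].
Qed.

Lemma cyc4_rot p q r s : cyc4_edges p q r s = cyc4_edges q r s p.
Proof. exact: set4P. Qed.

Lemma cyc4_refl p q r s : cyc4_edges p q r s = cyc4_edges q p s r.
Proof.
rewrite /cyc4_edges (set2C q p) (set2C p s) (set2C s r) (set2C r q).
by rewrite [RHS]set4R set4P.
Qed.

Definition Fgood (H : {set {set {perm 'I_n}}}) :=
  [forall f in H, (f != [set x; y]) ==> is_edge_of G f].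

Definition Pth (H : {set {set {perm 'I_n}}}) := exists a b,
  [/\ H = cyc4_edges x a b y, uniq [:: x; a; b; y], G x a, G a b & G b y].

Lemma base H p q r s : H = cyc4_edges p q r s -> uniq [:: p; q; r; s] ->
  p = x -> q = y -> Fgood H -> Pth H.
Proof.
move=> -> U ep eq F; subst p q.
move: (U); rewrite uniq4E => /andP[h1 /andP[h2 /andP[h3 /andP[h4 /andP[h5 h6]]]]].
have hG : forall u v, [set u; v] \in cyc4_edges x y r s -> u != x -> u != y -> u != v -> G u v.
  move=> u v hin ux uy uv; move/forallP: F => /(_ [set u; v]); rewrite hin /=.
  by rewrite set2_ne //= => /edge_set; apply.
exists s, r; split.
- rewrite /cyc4_edges (set2C x s) (set2C s r) (set2C r y) (set2C y x).
  by rewrite set4R.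
- by rewrite uniq4E h3 h2 h1 /= eq_sym h6 /= eq_sym h5 /= eq_sym h4.
- rewrite Gsym; apply: hG; try (by rewrite !inE eqxx !orbT); by rewrite // eq_sym.
- rewrite Gsym; apply: hG; try (by rewrite !inE eqxx !orbT); by rewrite // eq_sym.
- apply: hG; try (by rewrite set2C !inE eqxx !orbT); by rewrite // eq_sym.
Qed.
Ltac neqs := repeat (apply/andP; split); try (by []); try (by rewrite eq_sym).

Lemma base2 H p q r s : H = cyc4_edges p q r s -> uniq [:: p; q; r; s] ->
  [set x; y] = [set p; q] -> Fgood H -> Pth H.
Proof.
move=> EH U E F; case: (set2_eq (CT_neq hxy) E) => [[ep eq]|[ep eq]].
  exact: base EH U ep eq F.
apply: (base (p:=q) (q:=p) (r:=s) (s:=r)) => //; first by rewrite EH cyc4_refl.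
move: U; rewrite !uniq4E => /andP[?/andP[?/andP[?/andP[?/andP[? ?]]]]]; neqs.
Qed.

Lemma extract H : is_C4_of_CT H -> [set x; y] \in H -> Fgood H -> Pth H.
Proof.
case/existsP=> p /existsP [q /existsP [r /existsP [s /and5P [U _ _ _ /andP [_ /eqP EH]]]]].
have U1 : uniq [:: q; r; s; p].
  by move: U; rewrite !uniq4E => /andP[?/andP[?/andP[?/andP[?/andP[? ?]]]]]; neqs.
have U2 : uniq [:: r; s; p; q].
  by move: U; rewrite !uniq4E => /andP[?/andP[?/andP[?/andP[?/andP[? ?]]]]]; neqs.
have U3 : uniq [:: s; p; q; r].
  by move: U; rewrite !uniq4E => /andP[?/andP[?/andP[?/andP[?/andP[? ?]]]]]; neqs.
rewrite {1}EH /cyc4_edges !inE; case/orP => [/orP [/orP [|]|]|] /eqP E.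
- exact: base2 EH U E.
- by apply: (base2 (p:=q) (q:=r) (r:=s) (s:=p)) => //; rewrite EH cyc4_rot.
- by apply: (base2 (p:=r) (q:=s) (r:=p) (s:=q)) => //; rewrite EH cyc4_rot cyc4_rot.
- by apply: (base2 (p:=s) (q:=p) (r:=q) (s:=r)) => //; rewrite EH cyc4_rot cyc4_rot cyc4_rot.
Qed.
Hypothesis Gsub : forall u v, G u v -> CT u v.

Lemma six a1 b1 a2 b2 : uniq [:: x; a1; b1; y] -> uniq [:: x; a2; b2; y] ->
  G x a1 -> G a1 b1 -> G b1 y -> G x a2 -> G a2 b2 -> G b2 y ->
  a1 != a2 -> b1 != b2 -> has_C6 G.
Proof.
move=> U1 U2 g1 g2 g3 g4 g5 g6 d1 d2.
have d3 : a1 != b2.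
  apply/eqP => e; subst; exact: no_tri (Gsub g1) (Gsub g6) hxy.
have d4 : b1 != a2.
  apply/eqP => e; subst; exact: no_tri (Gsub g4) (Gsub g3) hxy.
move: U1 U2; rewrite !uniq4E => /andP[?/andP[?/andP[?/andP[?/andP[? ?]]]]] /andP[?/andP[?/andP[?/andP[?/andP[? ?]]]]].
have U : uniq [:: x; a1; b1; y; b2; a2].
  rewrite /= !inE !negb_or; neqs.
exists (fun i : 'I_6 => nth x [:: x; a1; b1; y; b2; a2] i); split.
  move=> i j e; apply/val_inj/eqP; rewrite -(nth_uniq x _ _ U) ?e ?eqxx //; exact: ltn_ord.
case=> [[|[|[|[|[|[|//]]]]]] Hi] /=.
all: by rewrite // Gsym.
Qed.
Lemma mainG : ~ has_C6 G ->
  #|[set H : {set {set {perm 'I_n}}} |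
      [&& is_C4_of_CT H, [set x; y] \in H &
          [forall f in H, (f != [set x; y]) ==> is_edge_of G f]]]| <= 2.
Proof.
move=> noC6.
set S := [set H | _].
rewrite leqNgt; apply/negP => c3.
have [H1 i1] : exists H1, H1 \in S.
  by apply/set0Pn; rewrite -card_gt0; apply: leq_trans c3.
have c2 : 1 < #|S :\ H1|.
  by move: c3; rewrite (cardsD1 H1) i1.
have [H2 i2] : exists H2, H2 \in S :\ H1.
  by apply/set0Pn; rewrite -card_gt0; apply: leq_trans c2.
have c1 : 0 < #|S :\ H1 :\ H2|.
  by move: c2; rewrite (cardsD1 H2 (S :\ H1)) i2.
have [H3 i3] : exists H3, H3 \in S :\ H1 :\ H2.
  by apply/set0Pn; rewrite -card_gt0.
move: i2 i3; rewrite !in_setD1 => /andP [n21 i2] /andP [n32 /andP [n31 i3]].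
have ex : forall H, H \in S -> Pth H.
  by move=> H; rewrite inE => /and3P [c m f]; apply: extract.
have [a1 [b1 [E1 U1 g11 g12 g13]]] := ex _ i1.
have [a2 [b2 [E2 U2 g21 g22 g23]]] := ex _ i2.
have [a3 [b3 [E3 U3 g31 g32 g33]]] := ex _ i3.
have P : forall H H' a b a' b', H != H' -> H = cyc4_edges x a b y -> H' = cyc4_edges x a' b' y ->
   uniq [:: x; a; b; y] -> uniq [:: x; a'; b'; y] -> G x a -> G a b -> G b y ->
   G x a' -> G a' b' -> G b' y -> (a = a' /\ b != b') \/ (a != a' /\ b = b').
  move=> H H' a b a' b' nH EH EH' u u' h1 h2 h3 h1' h2' h3'.
  case: (eqVneq a a') => ea; case: (eqVneq b b') => eb.
  - by move: nH; rewrite EH EH' ea eb eqxx.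
  - by left.
  - by right.
  - by case: noC6; apply: (six u u').
have [[e12 f12]|[e12 f12]] := P _ _ _ _ _ _ n21 E2 E1 U2 U1 g21 g22 g23 g11 g12 g13;
have [[e13 f13]|[e13 f13]] := P _ _ _ _ _ _ n31 E3 E1 U3 U1 g31 g32 g33 g11 g12 g13;
have [[e23 f23]|[e23 f23]] := P _ _ _ _ _ _ n32 E3 E2 U3 U2 g31 g32 g33 g21 g22 g23;
  subst => //; try (by match goal with H : is_true (?u != ?u) |- _ => by rewrite eqxx in H end).
  move: U1 U2 U3; rewrite !uniq4E => /andP[?/andP[?/andP[?/andP[?/andP[? ?]]]]] /andP[?/andP[?/andP[?/andP[?/andP[? ?]]]]] /andP[?/andP[?/andP[?/andP[?/andP[? ?]]]]].
  apply: (CN (u:=a1) (w:=y) (c1:=x) (c2:=b1) (c3:=b2) (c4:=b3)); rewrite ?uniq4E; try neqs;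
    by [apply: CTsym; apply: Gsub | apply: Gsub].
move: U1 U2 U3; rewrite !uniq4E => /andP[?/andP[?/andP[?/andP[?/andP[? ?]]]]] /andP[?/andP[?/andP[?/andP[?/andP[? ?]]]]] /andP[?/andP[?/andP[?/andP[?/andP[? ?]]]]].
apply: (CN (u:=x) (w:=b1) (c1:=y) (c2:=a1) (c3:=a2) (c4:=a3)); rewrite ?uniq4E; try neqs;
  by [apply: CTsym; apply: Gsub | apply: Gsub].
Qed.
End Graph.

Theorem mainTheorem13 (n : nat) (hn : 3 <= n) (G : rel {perm 'I_n})
  (Gsym : symmetric G) (Gsub : forall x y, G x y -> CT x y)
  (noC6 : ~ has_C6 G) (x y : {perm 'I_n}) (hxy : CT x y) :
  #|[set H : {set {set {perm 'I_n}}} |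
      [&& is_C4_of_CT H, [set x; y] \in H &
          [forall f in H, (f != [set x; y]) ==> is_edge_of G f]]]| <= 2.
Proof. exact: (mainG Gsym hxy Gsub noC6). Qed.
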